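(* Let $L$ be the set of all nonempty finite subsets of $\omega$. For $n\in\mathbb{N}$ let $x_n^*\in[-1,1]^L$ be given by $x_n^*(A)=1$ if $n\in A$ and $x_n^*(A)=0$ otherwise, and define $\Phi: FBL(L) \to \mathbb{R}^{\mathbb{N}}$ by $\Phi(f)=(f(x_n^* ))_{n\in\mathbb{N}}$. Then: (1) $\Phi(\delta_A) = \sum_{i \in A}e_i$ for every $A \in L$, where $(e_i)$ are the unit vectors of $c_0$; (2) $\Phi(f)\in c_0$ for every $f\in FBL(L)$, and $\Phi: FBL(L)\to c_0$ is a Banach lattice homomorphism; (3) $\Phi: FBL(L)\to c_0$ is surjective.
   Context: Here $\omega$ denotes the set of natural numbers, indexed so that the coordinates of $c_0$ correspond to its elements. For a nonempty set $A$ and $x\in A$, $\delta_x:[-1,1]^A\to[-1,1]$ is $\delta_x(x^* )=x^*(x)$. For $f:[-1,1]^A\to\mathbb{R}$, $$\|f\| = \sup \Big\{\sum_{i = 1}^n | f(x_{i}^{\ast})| : n \in \mathbb{N},\ x_1^{\ast}, \ldots, x_n^{\ast} \in [-1,1]^A,\ \sup_{x \in A} \sum_{i=1}^n |x_i^{\ast}(x)| \leq 1 \Big\}.$$ $FBL(A)$ is the Banach lattice generated by the functions $\delta_x$ ($x\in A$) inside the Banach lattice of all functions $[-1,1]^A\to\mathbb{R}$ with finite norm (pointwise operations and order). *)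

(* Defs.v *)
From HB Require Import structures.
From mathcomp Require Import all_boot all_order all_algebra.
From mathcomp Require Import all_classical all_reals.
From mathcomp Require Import ereal topology normedtype sequences.
From mathcomp Require Import Rstruct Rstruct_topology.
From Stdlib Require Import Rdefinitions.

Set Implicit Arguments. Unset Strict Implicit. Unset Printing Implicit Defensive.
Import Order.TTheory GRing.Theory Num.Theory.
Import numFieldNormedType.Exports.
Local Open Scope classical_set_scope.
Local Open Scope ring_scope.

Definition cube (A : Type) : Type :=
  {x : A -> R | forall a, -1 <= x a <= 1}.

Definition delta (A : Type) (x : A) : cube A -> R := fun p => sval p x.

Definition admissible (A : Type) (n : nat) (xs : 'I_n -> cube A) : Prop :=
  forall x : A, \sum_(i < n) `|sval (xs i) x| <= 1.

Definition fblnorm (A : Type) (f : cube A -> R) : \bar R :=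
  ereal_sup [set (r%:E)%E | r in
     [set r : R | exists n (xs : 'I_n -> cube A),
        admissible xs /\ r = \sum_(i < n) `|f (xs i)| ]].

Definition Hfin (A : Type) : set (cube A -> R) :=
  [set f | (fblnorm f < +oo)%E].
Arguments Hfin : clear implicits.

Definition closed_sublattice (A : Type) (S : set (cube A -> R)) : Prop :=
  [/\ S `<=` Hfin A,
      (forall f g, S f -> S g -> S (f \+ g)),
      (forall (c : R) f, S f -> S (fun p => c * f p)),
      (forall f g, S f -> S g -> S (fun p => Num.max (f p) (g p))) &
      (forall (u : nat -> cube A -> R) (f : cube A -> R),
          (forall k, S (u k)) -> Hfin A f ->
          (forall eps : R, 0 < eps ->
              \forall k \near \oo, (fblnorm (fun p => (u k p - f p)%R) <= eps%:E)%E) ->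
          S f)].

Definition FBL (A : Type) : set (cube A -> R) :=
  \bigcap_(S in [set S | closed_sublattice S /\ forall x : A, S (delta x)]) S.

Definition L : Type := {B : set nat | finite_set B /\ B !=set0}.

Lemma xstar_in_cube (n : nat) :
  forall B : L, -1 <= ((n \in sval B)%:R : R) <= 1.
Proof.
move=> B; case: (n \in sval B) => /=.
- by rewrite lexx andbT; apply: (@le_trans _ _ 0); rewrite ?oppr_le0 ?ler01.
- by rewrite ler01 andbT oppr_le0 ler01.
Qed.

Definition xstar (n : nat) : cube L :=
  exist _ (fun B : L => ((n \in sval B)%:R : R)) (xstar_in_cube n).

Definition Phi (f : cube L -> R) : nat -> R := fun n => f (xstar n).

Definition unitv (i : nat) : nat -> R := fun n => ((i == n)%:R : R).

Definition c0 (u : nat -> R) : Prop := u @ \oo --> (0 : R).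

Definition lattice_hom_on (S : set (cube L -> R))
    (T : (cube L -> R) -> nat -> R) : Prop :=
  [/\ (forall f g, S f -> S g -> T (f \+ g) = T f \+ T g),
      (forall (c : R) f, S f -> T (fun p => c * f p) = (fun n => c * T f n)) &
      (forall f g, S f -> S g ->
          T (fun p => Num.max (f p) (g p)) = (fun n => Num.max (T f n) (T g n)))].

(* Main.v *)
Require Import Defs.
From HB Require Import structures.
From mathcomp Require Import all_boot all_order all_algebra.
From mathcomp Require Import all_classical all_reals.
From mathcomp Require Import ereal topology normedtype sequences.
From mathcomp Require Import Rstruct Rstruct_topology.
From Stdlib Require Import Rdefinitions.
From mathcomp Require Import ring lra.
Import Order.TTheory GRing.Theory Num.Theory.
Import numFieldNormedType.Exports.
Local Open Scope classical_set_scope.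
Local Open Scope ring_scope.
Set Implicit Arguments. Unset Strict Implicit. Unset Printing Implicit Defensive.

Section Norm.
Variable A : Type.

Lemma fbl_le (f : cube A -> R) (C : R) :
  (forall n (xs : 'I_n -> cube A), admissible xs -> \sum_(i < n) `|f (xs i)| <= C) ->
  (fblnorm f <= C%:E)%E.
Proof.
move=> H; rewrite /fblnorm; apply: ge_ereal_sup => _ [r [n [xs [ad ->]]] <-].
by rewrite lee_fin; exact: H.
Qed.

Lemma Hfin_of_bound (f : cube A -> R) (C : R) :
  (forall n (xs : 'I_n -> cube A), admissible xs -> \sum_(i < n) `|f (xs i)| <= C) ->
  Hfin A f.
Proof. move=> H; rewrite /Hfin /=; have := fbl_le H. case: (fblnorm f) => // r _; exact: ltry. Qed.

Lemma bound_of_Hfin (f : cube A -> R) : Hfin A f -> exists C : R,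
  (forall n (xs : 'I_n -> cube A), admissible xs -> \sum_(i < n) `|f (xs i)| <= C).
Proof.
rewrite /Hfin /=.
have ub : forall n (xs : 'I_n -> cube A), admissible xs ->
   ((\sum_(i < n) `|f (xs i)|)%:E <= fblnorm f)%E.
  move=> n xs ad; apply: ereal_sup_ubound; exists (\sum_(i < n) `|f (xs i)|) => //.
  by exists n, xs.
case E: (fblnorm f) => [c| |] // _.
  by exists c => n xs ad; have := ub n xs ad; rewrite E lee_fin.
exists 0 => n xs ad; have := ub n xs ad; by rewrite E leeNy_eq.
Qed.

Lemma cube_norm (p : cube A) (x : A) : `|sval p x| <= 1.
Proof. by rewrite ler_norml; case: p => q /= /(_ x). Qed.

Lemma norm_point (f : cube A -> R) (p : cube A) : (`|f p|%:E <= fblnorm f)%E.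
Proof.
apply: ereal_sup_ubound; exists `|f p| => //.
exists 1%N, (fun _ => p); split; last by rewrite big_ord1.
by move=> x; rewrite big_ord1; exact: cube_norm.
Qed.

End Norm.

Lemma norm_max (a b : R) : `|Num.max a b| <= `|a| + `|b|.
Proof.
case: (lerP a b) => h.
  by rewrite lerDr normr_ge0.
by rewrite lerDl normr_ge0.
Qed.

Lemma c0P (a : nat -> R) : c0 a <-> forall e : R, 0 < e -> \forall n \near \oo, `|a n| < e.
Proof. exact: (@cvgr0Pnorm_lt _ R^o _ _ _ a). Qed.

Lemma c0_dom (a b w : nat -> R) (K : R) : 0 < K -> c0 a -> c0 b ->
  (forall n, `|w n| <= K * (`|a n| + `|b n|)) -> c0 w.
Proof.
move=> K0 ha hb hw; apply/c0P => e e0.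
have e2 : 0 < e / (2 * K) by rewrite divr_gt0 // mulr_gt0.
move/c0P/(_ _ e2): ha => ha.
move/c0P/(_ _ e2): hb => hb.
apply: filterS2 ha hb => n h1 h2.
apply: (le_lt_trans (hw n)).
have -> : e = K * (e / (2 * K) + e / (2 * K)).
  by field; rewrite gt_eqF.
by rewrite ltr_pM2l // ltrD.
Qed.

Definition Sc0 (f : cube L -> R) := Hfin L f /\ c0 (Phi f).

Lemma Sc0_closed : closed_sublattice Sc0.
Proof.
split.
- by move=> f [].
- move=> f g [hf cf] [hg cg]; split.
    have [C1 H1] := bound_of_Hfin hf; have [C2 H2] := bound_of_Hfin hg.
    apply: (@Hfin_of_bound _ _ (C1 + C2)) => n xs ad.
    apply: le_trans (_ : \sum_(i < n) (`|f (xs i)| + `|g (xs i)|) <= _).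
      by apply: ler_sum => i _; exact: ler_normD.
    by rewrite big_split /=; apply: lerD; [exact: H1 | exact: H2].
  apply: (c0_dom (K := 1)) cf cg _ => // n; rewrite mul1r; exact: ler_normD.
- move=> c f [hf cf]; split.
    have [C1 H1] := bound_of_Hfin hf.
    apply: (@Hfin_of_bound _ _ (`|c| * C1)) => n xs ad.
    under eq_bigr do rewrite normrM.
    by rewrite -mulr_sumr ler_wpM2l ?normr_ge0 // H1.
  apply: (@c0_dom _ _ _ (`|c| + 1) _ cf cf) => //.
    by rewrite ltr_wpDl.
  move=> n; rewrite /Phi normrM ler_pM //; last by rewrite lerDl.
  by rewrite lerDl.
- move=> f g [hf cf] [hg cg]; split.
    have [C1 H1] := bound_of_Hfin hf; have [C2 H2] := bound_of_Hfin hg.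
    apply: (@Hfin_of_bound _ _ (C1 + C2)) => n xs ad.
    apply: le_trans (_ : \sum_(i < n) (`|f (xs i)| + `|g (xs i)|) <= _).
      by apply: ler_sum => i _; exact: norm_max.
    by rewrite big_split /=; apply: lerD; [exact: H1 | exact: H2].
  apply: (c0_dom (K := 1)) cf cg _ => // n; rewrite mul1r; exact: norm_max.
- move=> u f hu hf hc; split => //.
  apply/c0P => e e0.
  have e2 : 0 < e / 2 by rewrite divr_gt0.
  have [k hk] := filter_ex (hc _ e2).
  have hp : forall p, `|u k p - f p| <= e / 2.
    move=> p; rewrite -lee_fin; exact: le_trans (norm_point _ p) hk.
  have := (hu k).2; move/c0P/(_ _ e2).
  apply: filterS => n hn.
  have -> : Phi f n = u k (xstar n) - (u k (xstar n) - f (xstar n)).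
    by rewrite opprB addrC subrK.
  apply: le_lt_trans (ler_normB _ _) _.
  have -> : e = e / 2 + e / 2 by rewrite -splitr.
  by apply: ltr_leD => //; exact: hp.
Qed.

Lemma fin_bound (B : set nat) : finite_set B -> exists N : nat, forall n : nat, B n -> leq n.+1 N.
Proof.
move=> fB; exists (\max_(i <- finmap.enum_fset (fset_set B)) i)%N.+1 => n Bn.
rewrite ltnS; apply: (@leq_bigmax_seq _ _ _ id) => //.
by rewrite in_fset_set // inE.
Qed.

Lemma Sc0_delta (x : L) : Sc0 (delta x).
Proof.
split.
  apply: (@Hfin_of_bound _ _ 1) => n xs ad; exact: ad.
apply/c0P => e e0.
have [N HN] := fin_bound (proj1 (svalP x)).
apply: filterS (nbhs_infty_ge N) => n Nn.
rewrite /Phi /delta /=.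
case: (boolP (n \in sval x)) => [/set_mem h|_]; last by rewrite normr0.
by have := HN n h; rewrite ltnNge Nn.
Qed.

Lemma FBL_Sc0 f : FBL f -> Sc0 f.
Proof.
move=> hf; apply: hf; split; [exact: Sc0_closed | exact: Sc0_delta].
Qed.

Lemma c0P' (a : nat -> R) : c0 a -> forall e : R, 0 < e -> \forall n \near \oo, `|a n| < e.
Proof. by move/c0P. Qed.

Lemma limE (a : nat -> R) (l : R) : a @ \oo --> l -> limn a = l.
Proof. move=> h. exact: (cvg_lim (@Rhausdorff R) h). Qed.
Lemma cvgE (a : nat -> R) (l : R) : a @ \oo --> l -> cvgn a.
Proof. move=> h. by apply/cvg_ex; exists l. Qed.
Lemma cvgRP (a : nat -> R) (l : R) : a @ \oo --> l <-> forall e : R, 0 < e -> \forall n \near \oo, `|l - a n| < e.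
Proof. exact: (@cvgrPdist_lt _ R^o _ _ _ a). Qed.

Lemma bnd (c : nat -> R) : c0 c -> exists M : R, 0 < M /\ forall n, `|c n| <= M.
Proof. move=> h. have := @cvg_seq_bounded _ R^o c (@cvgE c 0 h).
move=> hb. rewrite /= /bounded_near in hb. have [M hM] := filter_ex hb.
exists (`|M| + 1); split. by rewrite ltr_wpDl.
move=> n; apply: le_trans (hM n I) _. by rewrite ler_wpDr // ler_norm. Qed.

Lemma key_id (x t t' : R) : t' <= t ->
  Num.max 0 (- Num.max (- (x - t')) (- (t - t'))) = Num.min x t - Num.min x t'.
Proof.
move=> h.
have [h1|h1] := lerP (- (x - t')) (- (t - t'));
have [h2|h2] := lerP x t; have [h3|h3] := lerP x t';
have [h4|h4] := lerP 0 (- (- (t - t')));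
have [h5|h5] := lerP 0 (- (- (x - t'))); lra.
Qed.

Lemma teleG (f : nat -> R) K N : leq K N ->
  \sum_(K <= k < N) (f k - f k.+1) = f K - f N.
Proof.
move=> KN; rewrite -[f K - f N]opprB -(telescope_sumr _ KN) -sumrN.
by apply: eq_bigr => k _; rewrite opprB.
Qed.

Lemma FBL_delta (x : L) : FBL (delta x).
Proof. by move=> S [_ h]; exact: h. Qed.

Lemma FBL_add (f g : cube L -> R) : FBL f -> FBL g -> FBL (f \+ g).
Proof.
move=> hf hg S [hc hd]; case: (hc) => _ hS _ _ _; apply: hS.
  exact: hf. exact: hg.
Qed.

Lemma FBL_scale (a : R) (f : cube L -> R) : FBL f -> FBL (fun p => a * f p).
Proof.
move=> hf S [hc hd]; case: (hc) => _ _ hS _ _; apply: hS; exact: hf.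
Qed.

Lemma FBL_max (f g : cube L -> R) : FBL f -> FBL g -> FBL (fun p => Num.max (f p) (g p)).
Proof.
move=> hf hg S [hc hd]; case: (hc) => _ _ _ hS _; apply: hS.
  exact: hf. exact: hg.
Qed.

Lemma FBL_lim (u : nat -> cube L -> R) (f : cube L -> R) : (forall k, FBL (u k)) -> Hfin L f ->
  (forall eps : R, 0 < eps ->
     \forall k \near \oo, (fblnorm (fun p => (u k p - f p)%R) <= eps%:E)%E) ->
  FBL f.
Proof.
move=> hu hf hc S [hcl hd]; case: (hcl) => _ _ _ _ hS; apply: hS hf hc.
move=> k; exact: hu.
Qed.

Lemma FBL_ext (f g : cube L -> R) : (forall p, f p = g p) -> FBL f -> FBL g.
Proof. by move=> h; have -> : g = f by apply/funext => p; rewrite h. Qed.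

Definition single (m : nat) : L :=
  exist _ [set m] (conj (finite_set1 m) (ex_intro _ m erefl)).
Definition Bset (N : nat) : L :=
  exist _ `I_N.+1 (conj (finite_II _) (ex_intro _ 0%N (ltn0Sn N))).

Lemma FBL_zero : FBL (fun _ : cube L => 0 : R).
Proof.
apply: (@FBL_ext (fun p => 0 * delta (single 0) p)); first by move=> p; rewrite mul0r.
exact: FBL_scale (FBL_delta _).
Qed.

Lemma FBL_sum (h : nat -> cube L -> R) N : (forall k, FBL (h k)) ->
  FBL (fun p => \sum_(0 <= k < N) h k p).
Proof.
move=> hh; elim: N => [|N IH].
  by apply: FBL_ext FBL_zero => p; rewrite big_geq.
apply: (@FBL_ext ((fun p => \sum_(0 <= k < N) h k p) \+ h N)).
  by move=> p; rewrite big_nat_recr.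
exact: FBL_add.
Qed.

Lemma delta_xstar (B : L) n : delta B (xstar n) = (n \in sval B)%:R.
Proof. by []. Qed.

Lemma sum_pick (F : nat -> R) n K :
  \sum_(0 <= m < K) F m * (n \in [set m])%:R = if leq n.+1 K then F n else 0.
Proof.
elim: K => [|K IH]; first by rewrite big_geq.
rewrite big_nat_recr // IH in_set1.
case: (eqVneq n K) => [->|nK]; first by rewrite ltnn ltnSn /= add0r mulr1.
by rewrite /= mulr0 addr0 ltnS ltn_neqAle nK.
Qed.

Section Construct.
Variable c : nat -> R.
Variable M : R.
Hypothesis M0 : 0 < M.
Hypothesis cM : forall n, 0 <= c n <= M.
Definition tt (k : nat) := GRing.mul M (harmonic k).
Variable Nf : nat -> nat.
Hypothesis hNf : forall k n, leq (Nf k).+1 n -> c n <= tt k.+1.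

Lemma harmonicE k : @harmonic R k = (k.+1%:R)^-1.
Proof. by []. Qed.

Lemma tt_gt0 k : 0 < tt k.
Proof. by rewrite /tt mulr_gt0 // harmonic_gt0. Qed.

Lemma tt_dec k : tt k.+1 <= tt k.
Proof.
rewrite /tt ler_pM2l // !harmonicE lef_pV2 ?ler_nat ?posrE ?ltr0n //.
Qed.

Lemma tt0 : tt 0 = M.
Proof. by rewrite /tt harmonicE invr1 mulr1. Qed.

Lemma tt_le k : tt k <= M.
Proof. elim: k => [|k IH]; first by rewrite tt0. exact: le_trans (tt_dec k) IH. Qed.

Lemma c0tt : c0 tt.
Proof.
have ch : c0 harmonic by exact: cvg_harmonic.
pose K := M + 1.
apply: (@c0_dom _ _ _ K _ ch ch) => //; first by rewrite /K ltr_wpDr // ltW.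
move=> n; rewrite /tt normrM (gtr0_norm M0) ler_pM ?normr_ge0 ?(ltW M0) // /K ?lerDl ?normr_ge0 //.
Qed.

Definition aa k := tt k - tt k.+1.
Lemma aa_ge0 k : 0 <= aa k.
Proof. by rewrite /aa subr_ge0 tt_dec. Qed.

Definition Q k (p : cube L) := \sum_(0 <= m < (Nf k).+1) (c m - tt k.+1) * delta (single m) p.
Definition g k (p : cube L) :=
  Num.max 0 (- Num.max (- Q k p) (- (aa k * delta (Bset (Nf k)) p))).
Definition u N (p : cube L) := \sum_(0 <= k < N) g k p.

Lemma g_ge0 k p : 0 <= g k p.
Proof. by rewrite /g le_max lexx. Qed.

Lemma g_le k p : g k p <= aa k * `|delta (Bset (Nf k)) p|.
Proof.
rewrite /g ge_max mulr_ge0 ?aa_ge0 ?normr_ge0 //=.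
apply: (@le_trans _ _ (aa k * delta (Bset (Nf k)) p)).
  by rewrite lerNl le_max lexx orbT.
by rewrite ler_wpM2l ?aa_ge0 // ler_norm.
Qed.

Lemma g_xstar k n : g k (xstar n) = Num.min (c n) (tt k) - Num.min (c n) (tt k.+1).
Proof.
rewrite /g /Q delta_xstar /=.
have -> : \sum_(0 <= m < (Nf k).+1) (c m - tt k.+1) * delta (single m) (xstar n)
   = if leq n.+1 (Nf k).+1 then c n - tt k.+1 else 0.
  exact: (sum_pick (fun m => c m - tt k.+1)).
have -> : (n \in `I_(Nf k).+1) = leq n.+1 (Nf k).+1.
  by apply/idP/idP => [/set_mem|h]; [|apply/mem_set].
case: ifP => h.
  by rewrite mulr1 key_id // tt_dec.
have cn : c n <= tt k.+1 by apply: hNf; rewrite leqNgt h.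
rewrite mulr0 oppr0 maxxx oppr0 maxxx.
rewrite min_l; last exact: le_trans cn (tt_dec k).
by rewrite min_l // subrr.
Qed.

Lemma u_mono p : {homo (fun N => u N p) : n m / leq n m >-> n <= m}.
Proof.
move=> n m nm; rewrite /u (@big_cat_nat _ _ _ n 0 m) // /= lerDl.
by apply: sumr_ge0 => k _; exact: g_ge0.
Qed.

Lemma sum_aa K N : leq K N -> \sum_(K <= k < N) aa k = tt K - tt N.
Proof. exact: teleG. Qed.

Lemma u_bnd p N : u N p <= M.
Proof.
apply: (@le_trans _ _ (\sum_(0 <= k < N) aa k)).
  apply: ler_sum => k _; apply: le_trans (g_le k p) _.
  by rewrite ler_piMr ?aa_ge0 // cube_norm.
rewrite sum_aa // tt0 lerBlDr lerDl; exact: ltW (tt_gt0 N).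
Qed.

Lemma u_cvg p : cvgn (fun N => u N p).
Proof.
apply: nondecreasing_is_cvgn; first exact: (@u_mono p).
by exists M => _ [N _ <-]; exact: u_bnd.
Qed.

Definition ff (p : cube L) := limn (fun N => u N p).

Lemma ff_ge p K : u K p <= ff p.
Proof. have := @nondecreasing_cvgn_le _ (fun N => u N p) (@u_mono p) (@u_cvg p) K. by []. Qed.

Lemma u_cvg_to p : (fun N => u N p) @ \oo --> ff p.
Proof. exact: u_cvg. Qed.

Lemma cvg_bigsum n (s : 'I_n -> nat -> R) (l : 'I_n -> R) :
  (forall i, s i @ \oo --> l i) ->
  (fun N => \sum_(i < n) s i N) @ \oo --> \sum_(i < n) l i.
Proof.
elim: n s l => [|n IH] s l h.
  rewrite big_ord0; have -> : (fun N => \sum_(i < 0) s i N) = fun=> 0.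
    by apply/funext => N; rewrite big_ord0.
  exact: cvg_cst.
rewrite big_ord_recr /=.
have -> : (fun N => \sum_(i < n.+1) s i N) = (fun N => \sum_(i < n) s (widen_ord (leqnSn n) i) N + s ord_max N).
  by apply/funext => N; rewrite big_ord_recr.
apply: (@cvgD _ R^o _ _ _ (fun N => \sum_(i < n) s (widen_ord (leqnSn n) i) N) (s ord_max)).
  by apply: IH => i; exact: h.
exact: h.
Qed.

Lemma ff_bound K n (xs : 'I_n -> cube L) : admissible xs ->
  \sum_(i < n) `|ff (xs i) - u K (xs i)| <= tt K.
Proof.
move=> ad.
under eq_bigr do rewrite ger0_norm ?subr_ge0 ?ff_ge //.
have hl : (fun N => \sum_(i < n) (u N (xs i) - u K (xs i))) @ \oo -->
          \sum_(i < n) (ff (xs i) - u K (xs i)).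
  apply: cvg_bigsum => i.
  exact: (@cvgB _ R^o _ _ _ (fun N => u N (xs i)) (fun=> u K (xs i)) _ _ (@u_cvg_to (xs i)) (cvg_cst _)).
rewrite -(limE hl); apply: limr_le; first exact: cvgE hl.
apply: filterS (nbhs_infty_ge K) => N KN.
have -> : \sum_(i < n) (u N (xs i) - u K (xs i)) =
          \sum_(i < n) \sum_(K <= k < N) g k (xs i).
  apply: eq_bigr => i _; rewrite /u (@big_cat_nat _ _ _ K 0 N) // /=.
  by rewrite /= addrAC subrr add0r.
rewrite exchange_big /=.
apply: (@le_trans _ _ (\sum_(K <= k < N) aa k)).
  apply: ler_sum => k _.
  apply: (@le_trans _ _ (\sum_(i < n) aa k * `|delta (Bset (Nf k)) (xs i)|)).
    by apply: ler_sum => i _; exact: g_le.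
  by rewrite -mulr_sumr ler_piMr ?aa_ge0 //; exact: ad.
rewrite sum_aa // lerBlDr lerDl; exact: ltW (tt_gt0 N).
Qed.

Lemma FBL_g k : FBL (g k).
Proof.
have hQ : FBL (Q k).
  apply: (@FBL_sum (fun m p => (c m - tt k.+1) * delta (single m) p)) => m.
  exact: FBL_scale (FBL_delta _).
apply: (@FBL_ext (fun p => Num.max (0 * delta (single 0) p)
   (-1 * Num.max (-1 * Q k p) (-1 * (aa k * delta (Bset (Nf k)) p))))).
  by move=> p; rewrite /g mul0r !mulN1r.
apply: FBL_max; first exact: FBL_scale (FBL_delta _).
apply: FBL_scale; apply: FBL_max; first exact: FBL_scale hQ.
apply: (@FBL_scale (-1) (fun p => aa k * delta (Bset (Nf k)) p)).
exact: FBL_scale (FBL_delta _).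
Qed.

Lemma FBL_u N : FBL (u N).
Proof. exact: (@FBL_sum g N FBL_g). Qed.

Lemma FBL_ff : FBL ff.
Proof.
have u0 : forall p, u 0 p = 0 by move=> p; rewrite /u big_geq.
apply: (@FBL_lim u); first exact: FBL_u.
  apply: (@Hfin_of_bound _ _ (tt 0)) => n xs ad.
  have := ff_bound 0 ad.
  by under eq_bigr do rewrite u0 subr0.
move=> e e0.
have := c0P' c0tt e0.
apply: filterS => k hk.
apply: fbl_le => n xs ad.
under eq_bigr do rewrite distrC.
apply: le_trans (ff_bound k ad) _.
by apply: ltW; apply: le_lt_trans hk; exact: ler_norm.
Qed.

Lemma Phi_ff : Phi ff = c.
Proof.
apply/funext => n; rewrite /Phi /ff; apply: limE; apply/cvgRP => e e0.
have := c0P' c0tt e0.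
apply: filterS => N hN.
have -> : u N (xstar n) = Num.min (c n) (tt 0) - Num.min (c n) (tt N).
  rewrite /u; under eq_bigr do rewrite g_xstar.
  exact: (teleG (fun k => Num.min (c n) (tt k))).
have cn := cM n; case/andP: cn => c0n cnM.
rewrite tt0 (min_l cnM) opprB addrC subrK.
apply: le_lt_trans hN; rewrite ger0_norm; last by rewrite le_min c0n ltW ?tt_gt0.
apply: le_trans (ler_norm _); by rewrite ge_min lexx orbT.
Qed.

End Construct.

Lemma part1 (B : L) : Phi (delta B) = \sum_(i \in sval B) unitv i.
Proof.
have fB := proj1 (svalP B).
rewrite fsbig_finite // fct_sumE; apply/funext => n.
rewrite /Phi delta_xstar /unitv.
rewrite -(in_fset_set fB) -count_uniq_mem; last exact: finmap.fset_uniq.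
rewrite -sum1_count big_mkcond natr_sum /=; apply: eq_bigr => j _.
by case: eqP.
Qed.

Lemma construct_nonneg (c : nat -> R) (M : R) : 0 < M -> (forall n, 0 <= c n <= M) ->
  c0 c -> exists2 f, FBL f & Phi f = c.
Proof.
move=> M0 cM hc.
have : forall k, exists N : nat, forall n, leq N.+1 n -> c n <= tt M k.+1.
  move=> k; have := c0P' hc (tt_gt0 M0 k.+1).
  case=> N _ hN; exists N => n hn.
  have := hN n (ltnW hn); rewrite /= => h.
  exact: ltW (le_lt_trans (ler_norm _) h).
case/choice => Nf hNf.
exists (ff c M Nf); [exact: FBL_ff | exact: Phi_ff].
Qed.

Theorem mainTheorem4 :
  (forall B : L, Phi (delta B) = \sum_(i \in sval B) unitv i) /\
  (forall f, FBL f -> c0 (Phi f)) /\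
  lattice_hom_on (@FBL L) Phi /\
  (forall c : nat -> R, c0 c -> exists2 f, FBL f & Phi f = c).
Proof.
split; first exact: part1.
split; first by move=> f /FBL_Sc0 [].
split; first by split.
move=> c hc.
have [M [M0 hM]] := bnd hc.
have cb : forall n, -M <= c n <= M by move=> n; rewrite -ler_norml.
pose cp := fun n => Num.max (c n) 0.
pose cm := fun n => Num.max (- c n) 0.
have cpb : forall n, 0 <= cp n <= M.
  move=> n; case/andP: (cb n) => h1 h2; rewrite /cp le_max lexx orbT /= ge_max.
  by rewrite h2 ltW.
have cmb : forall n, 0 <= cm n <= M.
  move=> n; case/andP: (cb n) => h1 h2; rewrite /cm le_max lexx orbT /= ge_max.
  by rewrite lerNl h1 ltW.
have hcp : c0 cp.
  apply: (@c0_dom _ _ _ 1 _ hc hc) => // n; rewrite mul1r.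
  apply: le_trans (norm_max _ _) _; by rewrite normr0 addr0 lerDl.
have hcm : c0 cm.
  apply: (@c0_dom _ _ _ 1 _ hc hc) => // n; rewrite mul1r.
  apply: le_trans (norm_max _ _) _; by rewrite normr0 addr0 normrN lerDl.
have [f1 F1 P1] := construct_nonneg M0 cpb hcp.
have [f2 F2 P2] := construct_nonneg M0 cmb hcm.
exists (f1 \+ (fun p => -1 * f2 p)).
  by apply: FBL_add => //; exact: FBL_scale.
apply/funext => n.
have h1 : f1 (xstar n) = cp n by rewrite -P1.
have h2 : f2 (xstar n) = cm n by rewrite -P2.
rewrite /Phi /= h1 h2 /cp /cm.
have [h|h] := lerP (c n) 0; have [h'|h'] := lerP (- c n) 0; lra.
Qed.
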